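(* Let $R$ be an integral domain, $n\ge 2$, and let $a_1,\dots,a_n,c\in R$. Then \[ \det V(a_1,\dots,a_n)=\det V(a_1-c,a_2-c,\dots,a_n-c), \] where $V$ denotes the Vieta matrix.
   Context: For elements $b_1,\dots,b_m$ of a commutative ring and an integer $j\ge 0$, let $e_j(b_1,\dots,b_m)$ denote the $j$-th elementary symmetric polynomial, i.e. $e_0=1$ and $e_j(b_1,\dots,b_m)=\sum_{1\le l_1<\dots<l_j\le m} b_{l_1}\cdots b_{l_j}$ for $1\le j\le m$. The Vieta matrix $V(a_1,\dots,a_n)$ of $a_1,\dots,a_n$ is the $n\times n$ matrix whose entry in row $j+1$ and column $i$ (for $j=0,1,\dots,n-1$ and $i=1,\dots,n$) is $e_j(a_1,\dots,a_{i-1},a_{i+1},\dots,a_n)$, the $j$-th elementary symmetric polynomial of the $n-1$ elements obtained by omitting $a_i$. *)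

(* Defs.v *)
From HB Require Import structures.
From mathcomp Require Import all_boot all_order all_algebra.
Set Implicit Arguments. Unset Strict Implicit. Unset Printing Implicit Defensive.
Import GRing.Theory.
Local Open Scope ring_scope.

Definition esym (R : comNzRingType) (m : nat) (b : 'I_m -> R) (j : nat) : R :=
  \sum_(S : {set 'I_m} | #|S| == j) \prod_(l in S) b l.

Definition omit (R : Type) (n : nat) (a : 'I_n.+1 -> R) (i : 'I_n.+1) : 'I_n -> R :=
  fun k => a (lift i k).

(* The Vieta matrix of a_1..a_n (here n = n'.+1): entry in row j (0-based,
   j = 0..n-1) and column i is e_j(a with a_i omitted). *)
Definition vieta (R : comNzRingType) (n : nat) (a : 'I_n.+1 -> R) : 'M[R]_n.+1 :=
  \matrix_(j < n.+1, i < n.+1) esym (omit a i) j.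

(* Main.v *)
Require Import Defs.
From HB Require Import structures.
From mathcomp Require Import all_boot all_order all_algebra.
From mathcomp Require Import ring.
Import GRing.Theory.
Local Open Scope ring_scope.

Lemma key (R : comNzRingType) (m : nat) (b : 'I_m -> R) (G : {poly R}) :
  \prod_(k < m) ((b k)%:P * 'X + G) =
  \sum_(l < m.+1) (Defs.esym b l)%:P * ('X^l * G ^+ (m - l)).
Proof.
rewrite bigA_distr.
under eq_bigr => J _.
  rewrite (bigID (fun i => i \in J)) /=.
  under eq_bigr => i iJ do rewrite iJ.
  under [X in _ * X]eq_bigr => i iJ do rewrite (negbTE iJ).
  rewrite big_split /= prodr_const -rmorph_prod /= prodr_const.
  over.
rewrite (partition_big (fun J : {set 'I_m} => inord #|J| : 'I_m.+1) xpredT) //=.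
apply: eq_bigr => l _.
rewrite /Defs.esym rmorph_sum /= big_distrl /=.
apply: congr_big => // [J|J /eqP <-].
  have hJ : (#|J| <= m)%N by rewrite -[X in (_ <= X)%N](card_ord m) max_card.
  by rewrite -val_eqE /= inordK.
have hJ : (#|J| <= m)%N by rewrite -[X in (_ <= X)%N](card_ord m) max_card.
rewrite inordK //.
have -> : #|[pred x | x \in J]| = #|J| by apply: eq_card.
have -> : #|[pred x | x \notin J]| = (m - #|J|)%N.
  have e : #|[pred x | x \notin J]| = #|~: J| by apply: eq_card => x; rewrite !inE.
  by rewrite e -[X in (X - _)%N](card_ord m) -(cardsC J) addKn.
by rewrite mulrA.
Qed.

Lemma esym_coef (R : comNzRingType) (m : nat) (b : 'I_m -> R) (j : 'I_m.+1) :
  (\prod_(k < m) ((b k)%:P * 'X + 1))`_j = Defs.esym b j.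
Proof.
rewrite key coef_sum (bigD1 j) //= big1 ?addr0.
  by rewrite expr1n mulr1 coefCM coefXn eqxx mulr1.
move=> l hl; rewrite expr1n mulr1 coefCM coefXn.
by rewrite eq_sym (inj_eq val_inj) (negbTE hl) mulr0.
Qed.

Theorem corollary1 (R : idomainType) (n : nat) (hn : (2 <= n)%N)
  (a : 'I_n.-1.+1 -> R) (c : R) :
  \det (vieta a) = \det (vieta (fun i => a i - c)).
Proof.
set m := n.-1.
pose G : {poly R} := 1 - c%:P * 'X.
pose T : 'M[R]_m.+1 := \matrix_(j, l) ('X^l * G ^+ (m - l))`_j.
have -> : vieta (fun i => a i - c) = T *m vieta a.
  apply/matrixP => j i; rewrite !mxE.
  rewrite -esym_coef.
  have -> : \prod_(k < m) ((omit (fun i0 => a i0 - c) i k)%:P * 'X + 1)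
      = \prod_(k < m) ((omit a i k)%:P * 'X + G).
    by apply: eq_bigr => k _; rewrite /omit /G polyCB; ring.
  rewrite key coef_sum; apply: eq_bigr => l _.
  by rewrite !mxE coefCM mulrC.
rewrite det_mulmx det_trig ?big1 ?mul1r //.
  move=> l _; rewrite mxE coefXnM ltnn subnn -horner_coef0.
  by rewrite /G !hornerE /= subr0 expr1n.
apply/is_trig_mxP => j l hjl; by rewrite mxE coefXnM hjl.
Qed.
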